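(* For every $d\ge 5$, $\mu(Q_d)\le 2^{d-1}$.
   Context: $Q_d$ is the hypercube with vertex set $\{0,1\}^d$, two vertices adjacent iff their strings differ in exactly one bit. For a connected graph $G$ and $X\subseteq V(G)$, two vertices $x,y$ are $X$-visible if some shortest $x,y$-path has no internal vertex in $X$. $X$ is a mutual-visibility set if every two vertices of $X$ are $X$-visible; $\mu(G)$ is the maximum cardinality of a mutual-visibility set of $G$. *)

(* Defs.v *)
From mathcomp Require Import all_boot.
From Stdlib Require Import ClassicalEpsilon.
Set Implicit Arguments. Unset Strict Implicit. Unset Printing Implicit Defensive.

Definition pbool (P : Prop) : bool :=
  if excluded_middle_informative P then true else false.

Section Graph.
Variables (T : finType) (e : rel T).

(* [p] is the list of vertices after [x] of a walk from [x] to [y];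
   its length (number of edges) is [size p]. *)
Definition walk (x y : T) (p : seq T) : bool := path e x p && (last x p == y).

Definition shortest_path (x y : T) (p : seq T) : Prop :=
  walk x y p /\ forall q, walk x y q -> size p <= size q.

(* internal vertices of the walk x :: p (ending at last x p):
   all vertices except the first (x) and the last one *)
Definition internal (x : T) (p : seq T) : seq T := behead (belast x p).

Definition X_visible (X : {set T}) (x y : T) : Prop :=
  exists p, shortest_path x y p /\ all (fun v => v \notin X) (internal x p).

Definition mutual_visibility_set (X : {set T}) : Prop :=
  forall x y, x \in X -> y \in X -> X_visible X x y.

Definition mu : nat :=
  \max_(X : {set T} | pbool (mutual_visibility_set X)) #|X|.
End Graph.

Definition hamming d (u v : d.-tuple bool) : nat :=
  count (fun i : 'I_d => tnth u i != tnth v i) (enum 'I_d).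
Definition Q_adj d : rel (d.-tuple bool) := fun u v => hamming u v == 1.

(* Main.v *)
Require Import Defs.
From mathcomp Require Import all_boot zify.
From Stdlib Require Import Lia ClassicalEpsilon.
Set Implicit Arguments. Unset Strict Implicit. Unset Printing Implicit Defensive.

Section Cube.
Variable n : nat.
Local Notation V := (n.-tuple bool).

Definition Dset (u v : V) : {set 'I_n} := [set i | tnth u i != tnth v i].

Lemma hammingE (u v : V) : hamming u v = #|Dset u v|.
Proof.
rewrite /hamming cardE /enum_mem size_filter count_filter; apply: eq_count => i.
by rewrite /Dset !inE andbT.
Qed.

Lemma DsetC (u v : V) : Dset u v = Dset v u.
Proof. by apply/setP => i; rewrite /Dset !inE eq_sym. Qed.

Lemma hammingC (u v : V) : hamming u v = hamming v u.
Proof. by rewrite !hammingE DsetC. Qed.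

Lemma hamming_tri (u v w : V) : hamming u w <= hamming u v + hamming v w.
Proof.
rewrite !hammingE; apply: leq_trans (leq_card_setU _ _).
apply: subset_leq_card; apply/subsetP => i; rewrite /Dset !inE.
by case: (tnth u i); case: (tnth v i); case: (tnth w i).
Qed.

Lemma hamming0 (u v : V) : (hamming u v == 0) = (u == v).
Proof.
rewrite hammingE cards_eq0; apply/eqP/eqP => [H|->].
  apply: eq_from_tnth => i; apply/eqP; apply/negPn; apply/negP => Hi.
  by move/setP: H => /(_ i); rewrite !inE Hi.
by apply/setP => i; rewrite /Dset !inE eqxx.
Qed.

Lemma hamming_le (u v : V) : hamming u v <= n.
Proof. by rewrite hammingE; apply: leq_trans (max_card _) _; rewrite card_ord. Qed.

Lemma walk_lb (x y : V) p : walk (@Q_adj n) x y p -> hamming x y <= size p.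
Proof.
elim: p x => [|z p IH] x /=.
  by rewrite /walk /= => /eqP ->; rewrite leqn0 hamming0.
rewrite /walk /= => /andP [/andP [Hxz Hp] Hl].
apply: leq_trans (hamming_tri x z y) _.
by rewrite (eqP Hxz) add1n ltnS; apply: IH; rewrite /walk Hp.
Qed.

Lemma walk_ex (x y : V) : exists p, walk (@Q_adj n) x y p /\ size p = hamming x y.
Proof.
move Hk: (hamming x y) => k; elim: k x Hk => [|k IH] x Hk.
  by exists [::]; split=> //; rewrite /walk /=; rewrite -hamming0 Hk.
have : #|Dset x y| > 0 by rewrite -hammingE Hk.
case/card_gt0P => i Hi.
pose z : V := [tuple (if j == i then tnth y j else tnth x j) | j < n].
have Hxz : Dset x z = [set i].
  apply/setP => j; rewrite /Dset !inE tnth_mktuple.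
  by case: (j =P i) => [->|_]; [move: Hi; rewrite inE|rewrite eqxx].
have Hzy : Dset z y = Dset x y :\ i.
  apply/setP => j; rewrite /Dset !inE tnth_mktuple.
  by case: (j =P i) => [->|_]; rewrite ?eqxx.
have [p [Hp Hs]] : exists p, walk (@Q_adj n) z y p /\ size p = k.
  apply: IH; rewrite hammingE Hzy.
  by move: (cardsD1 i (Dset x y)); rewrite Hi -hammingE Hk add1n => [[]].
exists (z :: p); split; last by rewrite /= Hs.
move: Hp; rewrite /walk /= => /andP [-> ->].
by rewrite /Q_adj hammingE Hxz cards1.
Qed.

Definition gvis (X : {set V}) (x y : V) : Prop :=
  exists p, [/\ walk (@Q_adj n) x y p, size p = hamming x y &
                all (fun v => v \notin X) (internal x p)].

Definition gmvs (X : {set V}) : Prop := forall x y, x \in X -> y \in X -> gvis X x y.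

Lemma vis_gvis (X : {set V}) x y : X_visible (@Q_adj n) X x y -> gvis X x y.
Proof.
case=> p [[Hw Hmin] Ha]; exists p; split=> //.
apply/eqP; rewrite eqn_leq walk_lb // andbT.
by case: (walk_ex x y) => q [Hq <-]; apply: Hmin.
Qed.

Lemma mvs_gmvs (X : {set V}) : mutual_visibility_set (@Q_adj n) X -> gmvs X.
Proof. by move=> H x y Hx Hy; apply: vis_gvis; apply: H. Qed.

Lemma geo_step (x y z : V) q :
  walk (@Q_adj n) x y (z :: q) -> size (z :: q) = hamming x y ->
  [/\ hamming x z = 1, walk (@Q_adj n) z y q & size q = hamming z y].
Proof.
rewrite /walk /= => /andP [/andP [Hxz Hq] Hl] Hs.
have Hw : walk (@Q_adj n) z y q by rewrite /walk Hq.
split=> //; first exact/eqP.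
apply/eqP; rewrite eqn_leq walk_lb // andbT.
have := hamming_tri x z y; rewrite (eqP Hxz) -Hs /=.
by rewrite add1n ltnS.
Qed.

Lemma geo_interval (x y : V) p c :
  walk (@Q_adj n) x y p -> size p = hamming x y -> tnth x c = tnth y c ->
  forall v, v \in p -> tnth v c = tnth x c.
Proof.
elim: p x => [|z p IH] x //= Hw Hs0 Hc v.
case/(geo_step Hw): (Hs0) => Hxz Hzy Hs.
have Hzc : tnth z c = tnth x c.
  apply/eqP; apply/negPn; apply/negP => Hne.
  have Hc1 : c \in Dset x z by rewrite inE eq_sym.
  move/eqP: Hxz; rewrite hammingE => /cards1P [j Hj].
  move: Hc1; rewrite Hj inE => /eqP Hcj; subst j.
  have Hsub : c |: Dset x y \subset Dset z y.
    apply/subsetP => i; rewrite !inE => /orP [/eqP ->|Hi].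
      by rewrite -Hc.
    have Hic : i != c by apply: contraNneq Hi => ->; rewrite Hc eqxx.
    have : i \notin Dset x z by rewrite Hj inE.
    by rewrite inE negbK => /eqP <-.
  have := subset_leq_card Hsub.
  rewrite cardsU1 -!hammingE -Hs -Hs0.
  have -> : c \notin Dset x y by rewrite inE Hc eqxx.
  by rewrite /= add1n ltnNge leqnSn.
rewrite inE => /orP [/eqP -> //|Hv].
by rewrite (IH z) // Hzc.
Qed.

End Cube.

Section Half.
Variable k : nat.
Local Notation V := (k.-tuple bool).
Local Notation W := (k.+1.-tuple bool).

Definition ct (b : bool) (t : V) : W := [tuple of b :: t].
Definition halfc (X : {set W}) (b : bool) : {set V} := [set t | ct b t \in X].

Lemma ct_inj b : injective (ct b).
Proof. by move=> u v /(congr1 (fun w : W => behead w)) /= /val_inj. Qed.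

Lemma hamming_ct b (u v : V) : hamming (ct b u) (ct b v) = hamming u v.
Proof.
rewrite /hamming enum_ordSl /= /ct tnth0 eqxx /= count_map.
by apply: eq_count => i /=; rewrite !tnthS.
Qed.

Lemma ct_eta (v : W) : v = ct (thead v) (behead_tuple v).
Proof. by rewrite [LHS]tuple_eta. Qed.

Lemma half_gmvs (X : {set W}) b : gmvs X -> gmvs (halfc X b).
Proof.
move=> H t t'; rewrite !inE => Ht Ht'.
case: (H _ _ Ht Ht') => p [Hw Hs Ha].
have Hp : forall v, v \in p -> v = ct b (behead_tuple v).
  move=> v Hv; rewrite [LHS]ct_eta; congr ct.
  by rewrite /thead (geo_interval Hw Hs) //= /ct tnth0.
pose q := [seq (behead_tuple (v : W)) : V | v <- p].
have Epq : p = map (ct b) q.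
  by rewrite /q -map_comp -[LHS]map_id; apply/eq_in_map => v /Hp.
exists q; split.
- move: Hw; rewrite /walk Epq path_map last_map => /andP [Hpa /eqP /ct_inj ->].
  have Erel : relpre (ct b) (@Q_adj k.+1) =2 @Q_adj k.
    by move=> u v; rewrite /= /Q_adj hamming_ct.
  by rewrite eqxx andbT -(eq_path Erel).
- by rewrite -(hamming_ct b) -Hs /q size_map.
- move: Ha; rewrite Epq /internal belast_map behead_map all_map.
  by apply: sub_all => v; rewrite /= inE.
Qed.

Lemma card_half (X : {set W}) : #|X| = #|halfc X false| + #|halfc X true|.
Proof.
rewrite -(cardsID [set v : W | thead v] X) addnC.
have E : forall b, #|halfc X b| = #|X :&: [set v : W | thead v == b]|.
  move=> b; rewrite -(card_imset _ (@ct_inj b)); apply: eq_card => v.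
  rewrite !inE; apply/imsetP/andP => [[t]|[Hv /eqP Hb]].
    by rewrite inE => Ht ->; rewrite Ht /ct /thead tnth0.
  by exists (behead_tuple v); rewrite ?inE -Hb -ct_eta.
rewrite !E; congr (_ + _); apply: eq_card => v; rewrite !inE.
  by case: (thead v); rewrite ?andbT ?andbF.
by case: (thead v); rewrite ?andbT ?andbF.
Qed.

End Half.

Definition hamming' (u v : seq bool) := count (fun p => p.1 != p.2) (zip u v).

Fixpoint allbits (m : nat) : seq (seq bool) :=
  if m is m'.+1 then map (cons false) (allbits m') ++ map (cons true) (allbits m')
  else [:: [::]].

Section Comp.
Variable n : nat.
Local Notation V := (n.-tuple bool).
Definition v0 : V := nseq_tuple n false.
Definition mk (s : seq bool) : V :=
  match (size s == n) as b return (size s == n) = b -> V with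
  | true => fun h => Tuple h
  | false => fun _ => v0
  end erefl.
Definition En : seq V := map mk (allbits n).
Definition idx (v : V) := index v En.
Definition bits (Y : {set V}) : seq bool := [seq v \in Y | v <- En].

Fixpoint geos (f : nat) (x y : V) : seq (seq V) :=
  match f with
  | 0 => [:: [::]]
  | f'.+1 => if hamming' x y <= 1 then [:: [::]] else
      flatten [seq [seq z :: g | g <- geos f' z y] |
                z <- filter (fun z : V => (hamming' x z == 1) && (hamming' z y == (hamming' x y).-1)) En]
  end.

Definition tbl (pairs : seq (nat * nat)) : seq (nat * nat * seq (seq nat)) :=
  [seq (ij.1, ij.2, [seq [seq idx v | v <- g] | g <- geos n (nth v0 En ij.1) (nth v0 En ij.2)])
  | ij <- pairs].
End Comp.

Fixpoint allb {T} (p : T -> bool) (s : seq T) : bool :=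
  if s is x :: s' then (if p x then allb p s' else false) else true.
Fixpoint hasb {T} (p : T -> bool) (s : seq T) : bool :=
  if s is x :: s' then (if p x then true else hasb p s') else false.

Definition chk (T : seq (nat * nat * seq (seq nat))) (s : seq bool) : bool :=
  allb (fun e => if nth false s e.1.1 then (if nth false s e.1.2 then
                 hasb (fun g => allb (fun k => if nth false s k then false else true) g) e.2
                 else true) else true) T.

Fixpoint collect (m : nat) (acc : seq bool) (P : seq bool -> bool) (out : seq (seq bool)) :=
  if m is m'.+1 then collect m' (false :: acc) P (collect m' (true :: acc) P out)
  else if P acc then acc :: out else out.

Definition pairsN (N : nat) : seq (nat * nat) :=
  [seq ij <- [seq (i, j) | i <- iota 0 N, j <- iota 0 N] | ij.1 < ij.2].

Definition T4 := tbl 4 (pairsN 16).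
Definition P5 : seq (bool * nat) := [seq (thead v, idx (behead_tuple v)) | v <- En 5].
Definition cross := [seq ij <- pairsN 32 | (nth (false,0) P5 ij.1).1 != (nth (false,0) P5 ij.2).1].
Definition T5 := tbl 5 cross.
Definition L4 (T : seq (nat * nat * seq (seq nat))) :=
  collect 16 [::] (fun s => chk T s && (8 <= count id s)) [::].
Definition comb (P : seq (bool * nat)) (a b : seq bool) : seq bool :=
  [seq nth false (if pr.1 then b else a) pr.2 | pr <- P].

Definition bigf (t4 : seq (nat * nat * seq (seq nat))) (l4 : seq (seq bool))
  (t5 : seq (nat * nat * seq (seq nat))) : bool :=
  if allb (fun s => count id s <= 9) l4 then
  allb (fun a => allb (fun b => if count id a + count id b < 17 then true
     else if chk t5 (a ++ b) then false else true) l4) l4 else false.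

Definition big : bool := bigf T4 (L4 T4) T5.

Lemma hammingE' n (u v : n.-tuple bool) : hamming u v = hamming' u v.
Proof.
rewrite /hamming' -[in zip u v](map_tnth_enum u) -[in zip _ v](map_tnth_enum v).
by rewrite zip_map count_map.
Qed.

Lemma allbits_size m s : s \in allbits m -> size s = m.
Proof.
elim: m s => [|m IH] s /=; first by rewrite inE => /eqP ->.
by rewrite mem_cat => /orP [] /mapP [t /IH Ht ->]; rewrite /= Ht.
Qed.

Lemma allbits_mem s : s \in allbits (size s).
Proof.
elim: s => [|b s IH] //=; rewrite mem_cat.
by case: b; apply/orP; [right|left]; apply: map_f.
Qed.

Lemma allbits_uniq m : uniq (allbits m).
Proof.
elim: m => [|m IH] //=; rewrite cat_uniq !map_inj_uniq; try by move=> ? ? [].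
rewrite IH /= andbT; apply/hasPn => s /mapP [t _ ->].
by apply/mapP => [[u _ []]].
Qed.

Lemma allb_all T (p : pred T) s : allb p s = all p s.
Proof. by elim: s => //= x s ->; case: (p x). Qed.
Lemma hasb_has T (p : pred T) s : hasb p s = has p s.
Proof. by elim: s => //= x s ->; case: (p x). Qed.

Section Sound.
Variable n : nat.
Local Notation V := (n.-tuple bool).

Lemma mkK (s : seq bool) : size s = n -> val (mk n s) = s.
Proof.
move=> Hs; rewrite /mk; move: (erefl (size s == n)).
by case: {2 3}(size s == n) => //; rewrite Hs eqxx.
Qed.

Lemma mem_En (v : V) : v \in En n.
Proof.
apply/mapP; exists (val v); first by have := allbits_mem (val v); rewrite size_tuple.
by apply: val_inj; rewrite mkK // size_tuple.
Qed.

Lemma uniq_En : uniq (En n).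
Proof.
rewrite map_inj_in_uniq ?allbits_uniq // => s t Hs Ht Hst.
by rewrite -(mkK (allbits_size Hs)) -(mkK (allbits_size Ht)) Hst.
Qed.

Lemma count_bits (Y : {set V}) : count id (bits Y) = #|Y|.
Proof.
rewrite /bits count_map cardE -size_filter; apply: perm_size.
apply: uniq_perm; [exact: filter_uniq uniq_En | exact: enum_uniq|].
by move=> v; rewrite mem_filter mem_enum mem_En andbT.
Qed.

Lemma size_bits (Y : {set V}) : size (bits Y) = size (En n).
Proof. by rewrite size_map. Qed.

Lemma nth_bits (Y : {set V}) (v : V) : nth false (bits Y) (idx v) = (v \in Y).
Proof.
by rewrite (nth_map (v0 n)) ?index_mem ?mem_En // nth_index // mem_En.
Qed.

Lemma nth_bits_true (Y : {set V}) i : nth false (bits Y) i -> nth (v0 n) (En n) i \in Y.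
Proof.
case: (ltnP i (size (En n))) => Hi; first by rewrite (nth_map (v0 n)).
by rewrite nth_default // size_map.
Qed.

Lemma geos_sound f (x y : V) p :
  walk (@Q_adj n) x y p -> size p = hamming x y -> hamming x y <= f ->
  internal x p \in geos f x y.
Proof.
elim: f x p => [|f IH] x p Hw Hs Hf /=.
  by move: Hf; rewrite leqn0 -Hs; case: p Hw Hs.
rewrite -!hammingE'.
case: ifP => Hh.
  by move: Hh; rewrite -Hs; case: p Hw Hs => [|z [|a q]].
case: p Hw Hs => [|z q] Hw Hs; first by move: Hh; rewrite -Hs.
case/(geo_step Hw): (Hs) => Hxz Hzy Hq.
have Hq0 : q != [::] by move: Hh; rewrite -Hs; case: (q).
apply/flatten_mapP; exists z.
  rewrite mem_filter mem_En andbT -!hammingE' Hxz eqxx /= -Hq -Hs /=.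
  by [].
case: q Hq0 Hw Hs Hzy Hq => // a q _ Hw Hs Hzy Hq.
have -> : internal x (z :: a :: q) = z :: internal z (a :: q) by [].
apply: map_f; apply: IH => //.
by rewrite -Hq; move: Hf; rewrite -Hs ltnS.
Qed.

Lemma chk_sound (Y : {set V}) P : gmvs Y -> chk (tbl n P) (bits Y).
Proof.
move=> H; rewrite /chk allb_all all_map; apply/allP => ij _ /=.
case Hi: (nth false _ ij.1) => //; case Hj: (nth false _ ij.2) => //.
move/nth_bits_true: Hi => Hx; move/nth_bits_true: Hj => Hy.
case: (H _ _ Hx Hy) => p [Hw Hs Ha].
rewrite hasb_has; apply/hasP.
exists [seq idx v | v <- internal (nth (v0 n) (En n) ij.1) p].
  by apply: map_f; apply: geos_sound => //; apply: hamming_le.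
rewrite allb_all all_map; apply/allP => v Hv /=.
by rewrite nth_bits (negbTE (allP Ha v Hv)).
Qed.

End Sound.

Lemma collect_out m acc (P : seq bool -> bool) (out : seq (seq bool)) x :
  x \in out -> x \in collect m acc P out.
Proof.
elim: m acc out => [|m IH] acc out Hx /=; first by case: (P acc); rewrite ?inE ?Hx ?orbT.
by apply: (IH); apply: (IH).
Qed.

Lemma collect_mem m acc (P : seq bool -> bool) (out : seq (seq bool)) s :
  size s = m -> P (s ++ acc) -> s ++ acc \in collect m acc P out.
Proof.
elim: m acc out s => [|m IH] acc out s.
  by case: s => //= _ HP; rewrite HP inE eqxx.
case/lastP: s => [|s b]; first by move=> H; discriminate H.
rewrite size_rcons => -[Hs] HP /=.
rewrite -cats1 -catA /= in HP *.
case: b HP => HP.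
  by apply: collect_out; apply: IH.
by apply: IH.
Qed.

Lemma bits_half k (Y : {set k.+1.-tuple bool}) :
  bits Y = bits (halfc Y false) ++ bits (halfc Y true).
Proof.
rewrite /bits /En /= map_cat -!map_comp map_cat -!map_comp.
have E : forall b, {in allbits k, (fun v => v \in Y) \o (mk k.+1 \o cons b) =1
                    (fun v => v \in halfc Y b) \o mk k}.
  move=> b s Hs /=; rewrite inE; congr (_ \in Y); apply: val_inj.
  by rewrite /= !mkK //= (allbits_size Hs).
by congr (_ ++ _); apply/eq_in_map; apply: E.
Qed.

Lemma bigf_facts t4 l4 t5 : bigf t4 l4 t5 ->
  allb (fun s => count id s <= 9) l4 /\
  allb (fun a => allb (fun b => if count id a + count id b < 17 then true
     else if chk t5 (a ++ b) then false else true) l4) l4.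
Proof. by rewrite /bigf; case: ifP. Qed.

Lemma big_ok : bigf T4 (L4 T4) T5.
Proof. vm_compute. reflexivity. Qed.

Section Final.

Lemma Q4_bound (Z : {set 4.-tuple bool}) :
  gmvs Z -> #|Z| <= 9 /\ (8 <= #|Z| -> bits Z \in L4 T4).
Proof.
move=> HZ.
have Hin : 8 <= #|Z| -> bits Z \in L4 T4.
  move=> H8; rewrite /L4 -[bits Z]cats0; apply: collect_mem.
    by rewrite size_bits size_map.
  rewrite cats0 count_bits H8 andbT /T4; exact: (chk_sound (pairsN 16) HZ).
split; last exact: Hin.
case: (leqP 8 #|Z|) => [H8|H8]; last exact (leq_trans (ltnW H8) (isT : 8 <= 9)).
case: (bigf_facts big_ok) => H _; move: H; rewrite allb_all => /allP H.
by rewrite -count_bits; apply: H; apply: Hin.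
Qed.
Lemma Q5_contra (a b : seq bool) (A0 : a \in L4 T4) (A1 : b \in L4 T4)
  (C : chk (tbl 5 cross) (a ++ b)) (Hlt : (count id a + count id b < 17) = false) : False.
Proof.
case: (bigf_facts big_ok) => _; rewrite allb_all => /allP /(_ _ A0).
rewrite allb_all => /allP /(_ _ A1).
by rewrite Hlt /T5 C => H; discriminate H.
Qed.

Lemma Q5_bound (Y : {set 5.-tuple bool}) : gmvs Y -> #|Y| <= 16.
Proof.
move=> HY.
have [H0 I0] := Q4_bound (@half_gmvs 4 Y false HY).
have [H1 I1] := Q4_bound (@half_gmvs 4 Y true HY).
rewrite card_half leqNgt; apply/negP => H17.
have A0 := I0 (ltac:(lia)).
have A1 := I1 (ltac:(lia)).
have C := chk_sound cross HY.
rewrite bits_half in C.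
have Hlt : (count id (bits (halfc Y false)) + count id (bits (halfc Y true)) < 17) = false.
  by apply/negbTE; rewrite -leqNgt !count_bits.
exact: (Q5_contra A0 A1 C Hlt).
Qed.

Lemma exp2_split k : 0 < k -> 2 ^ k = 2 ^ k.-1 + 2 ^ k.-1.
Proof. by move=> Hk; rewrite -{1}(prednK Hk) expnS mul2n addnn. Qed.

Lemma gen_bound k : 5 <= k -> forall X : {set k.-tuple bool}, gmvs X -> #|X| <= 2 ^ k.-1.
Proof.
elim: k => [|k IH] Hk X HX; first discriminate Hk.
case: (ltngtP k 4) => Hk4.
- move: Hk; rewrite ltnS leqNgt Hk4 => H; discriminate H.
- rewrite card_half.
  have E0 := IH Hk4 _ (@half_gmvs _ X false HX).
  have E1 := IH Hk4 _ (@half_gmvs _ X true HX).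
  change (2 ^ k.+1.-1) with (2 ^ k).
  rewrite (exp2_split (ltn_trans (isT : 0 < 4) Hk4)).
  exact: (leq_add E0 E1).
- subst k; exact (Q5_bound HX).
Qed.
End Final.

Theorem corollary3p3 (d : nat) : 5 <= d -> mu (@Q_adj d) <= 2 ^ d.-1.
Proof.
move=> Hd; rewrite /mu; apply/bigmax_leqP => X.
move=> HX.
have H : mutual_visibility_set (@Q_adj d) X.
  move: HX; rewrite /pbool.
  destruct (excluded_middle_informative (mutual_visibility_set (@Q_adj d) X)) as [H|H].
    by move=> _; exact H.
  move=> E; discriminate E.
exact: (gen_bound Hd (mvs_gmvs H)).
Qed.
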